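(* Let $G, G_1,\dots,G_m$ and $H_1,\dots,H_n$ be abelian groups with tiles $A \subset B \subset C \subset G$, $T_i \subset B_i \subset G_i$ ($1\le i\le m$) and $U_i \subset C_i \subset H_i$ ($1\le i\le n$), and let $d$ be a positive integer. Suppose that $B_1\times\dots\times B_m\times B$ is $(T_1,\dots,T_m,A)$-tilable and that $C_1\times\dots\times C_n\times C^d$ is $(U_1,\dots,U_n,B^{\times d})$-tilable. Then $B_1\times\dots\times B_m\times C_1\times\dots\times C_n\times C^d$ is $(T_1,\dots,T_m,U_1,\dots,U_n,A^{\times d})$-tilable.
   Context: A tile in an abelian group is a non-empty subset. Given abelian groups $K_1,\dots,K_r$ and tiles $V_j\subset K_j$, let $\mathsf{V}_j \subset K_1\times\dots\times K_r$ be the set of points whose $j$-th coordinate lies in $V_j$ and whose other coordinates are $0$. A copy of $V_j$ is a translate $\mathsf{V}_j + x$ with $x \in K_1\times\dots\times K_r$. A subset of $K_1\times\dots\times K_r$ is $(V_1,\dots,V_r)$-tilable if it is a disjoint union of copies of $V_1,\dots,V_r$. The notation $V^{\times e}$ in such a list stands for $e$ consecutive entries $V,\dots,V$ (corresponding to $e$ consecutive factors). *)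

(* Defs.v *)
From HB Require Import structures.
From mathcomp Require Import all_boot all_algebra.
Set Implicit Arguments. Unset Strict Implicit. Unset Printing Implicit Defensive.
Import GRing.Theory.
Local Open Scope ring_scope.

Definition subset_of (T : Type) := T -> Prop.

Definition prodpt (I : finType) (K : I -> zmodType) := forall i : I, K i.

Definition boxset (I : finType) (K : I -> zmodType)
  (V : forall i, subset_of (K i)) : subset_of (prodpt K) :=
  fun p => forall i, V i (p i).

(* The copy  (sV_j + x)  of the tile V j, where sV_j is the set of points whose
   j-th coordinate lies in V j and whose other coordinates are 0:
   p lies in it iff p - x lies in sV_j. *)
Definition copy (I : finType) (K : I -> zmodType)
  (V : forall i, subset_of (K i)) (j : I) (x : prodpt K) : subset_of (prodpt K) :=
  fun p => V j (p j - x j) /\ (forall k, k != j -> p k - x k = 0).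

Definition tilable (I : finType) (K : I -> zmodType)
  (V : forall i, subset_of (K i)) (S : subset_of (prodpt K)) : Prop :=
  exists (Ix : Type) (c : Ix -> I) (t : Ix -> prodpt K),
    (forall p, S p <-> exists a, copy V (c a) (t a) p) /\
    (forall a b p, copy V (c a) (t a) p -> copy V (c b) (t b) p -> a = b).

(* Concatenation of two families of groups / of subsets (list concatenation
   K_1,...,K_r followed by L_1,...,L_s, indexed by I + J). *)
Definition famS (I J : finType) (K : I -> zmodType) (L : J -> zmodType)
  : I + J -> zmodType :=
  fun s => match s with inl i => K i | inr j => L j end.

Definition tS (I J : finType) (K : I -> zmodType) (L : J -> zmodType)
  (V : forall i, subset_of (K i)) (W : forall j, subset_of (L j))
  : forall s, subset_of (famS K L s) :=
  fun s => match s as s0 return subset_of (famS K L s0) with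
           | inl i => V i | inr j => W j end.

(* Main.v *)
Require Import Defs.
From HB Require Import structures.
From mathcomp Require Import all_boot all_algebra.
From Stdlib Require Import ProofIrrelevance FunctionalExtensionality.
Set Implicit Arguments. Unset Strict Implicit. Unset Printing Implicit Defensive.
Import GRing.Theory.
Local Open Scope ring_scope.

Definition projC (I J D : finType) (G : zmodType) (Gs : I -> zmodType) (Hs : J -> zmodType)
  (p : prodpt (famS (famS Gs Hs) (fun _ : D => G))) : prodpt (famS Hs (fun _ : D => G)) :=
  fun s => match s as s0 return famS Hs (fun _ : D => G) s0 with
           | inl j => p (inl (inr j)) | inr k => p (inr k) end.

Definition projA (I J D : finType) (G : zmodType) (Gs : I -> zmodType) (Hs : J -> zmodType)
  (k : D) (x : prodpt (famS Hs (fun _ : D => G)))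
  (p : prodpt (famS (famS Gs Hs) (fun _ : D => G))) : prodpt (famS Gs (fun _ : 'I_1 => G)) :=
  fun s => match s as s0 return famS Gs (fun _ : 'I_1 => G) s0 with
           | inl i => p (inl (inl i)) | inr _ => p (inr k) - x (inr k) end.

Definition join (I J D : finType) (G : zmodType) (Gs : I -> zmodType) (Hs : J -> zmodType)
  (b : prodpt Gs) (z : prodpt (famS Hs (fun _ : D => G))) :
  prodpt (famS (famS Gs Hs) (fun _ : D => G)) :=
  fun s => match s as s0 return famS (famS Gs Hs) (fun _ : D => G) s0 with
           | inl (inl i) => b i | inl (inr j) => z (inl j) | inr k => z (inr k) end.

Definition z2 (I J D : finType) (G : zmodType) (Gs : I -> zmodType) (Hs : J -> zmodType)
  (k : D) (x : prodpt (famS Hs (fun _ : D => G))) (y : prodpt (famS Gs (fun _ : 'I_1 => G)))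
  : prodpt (famS Hs (fun _ : D => G)) :=
  fun s => match s as s0 return famS Hs (fun _ : D => G) s0 with
           | inl j => x (inl j)
           | inr k' => if k' == k then x (inr k') + y (inr ord0) else x (inr k') end.

Definition cmap (I J D : finType) (k : D) (c : I + 'I_1) : (I + J) + D :=
  match c with inl i => inl (inl i) | inr _ => inr k end.

Lemma L1 (I J D : finType) (G : zmodType) (Gs : I -> zmodType) (Hs : J -> zmodType)
  (A B : subset_of G) (T : forall i, subset_of (Gs i)) (U : forall j, subset_of (Hs j))
  j b x p :
  copy (tS (tS T U) (fun _ : D => A)) (inl (inr j)) (join b x) p <->
  (forall i, p (inl (inl i)) = b i) /\ copy (tS U (fun _ : D => B)) (inl j) x (projC p).
Proof.
rewrite /copy; split.
- move=> [hU hz]; split.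
    by move=> i; apply/eqP; rewrite -subr_eq0; apply/eqP; exact: (hz (inl (inl i))).
  split; first exact: hU.
  case=> [j'|k] hk.
    apply: (hz (inl (inr j'))); apply: contra hk => /eqP [->] //.
  exact: (hz (inr k)).
- move=> [hb [hU hz]]; split; first exact: hU.
  case=> [[i|j']|k] hk /=.
  + by rewrite hb subrr.
  + apply: (hz (inl j')); apply: contra hk => /eqP [->] //.
  + exact: (hz (inr k)).
Qed.

Lemma L2 (I J D : finType) (G : zmodType) (Gs : I -> zmodType) (Hs : J -> zmodType)
  (A : subset_of G) (T : forall i, subset_of (Gs i)) (U : forall j, subset_of (Hs j))
  k c x y p :
  copy (tS (tS T U) (fun _ : D => A)) (cmap J k c) (join (fun i => y (inl i)) (z2 k x y)) p <->
  (forall s, s != inr k -> projC p s - x s = 0) /\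
  copy (tS T (fun _ : 'I_1 => A)) c y (projA k x p).
Proof.
rewrite /copy /join /z2 /projC /projA /cmap; case: c => [i|o]; last rewrite (ord1 o); split.
- move=> [hT hz]; split.
    case=> [j'|k'] hk; first exact: (hz (inl (inr j'))).
    have := hz (inr k'); rewrite /= (negbTE (_ : k' != k)); first by apply.
    by apply: contra hk => /eqP ->.
  split; first exact: hT.
  case=> [i'|o'] hk /=.
    apply: (hz (inl (inl i'))); apply: contra hk => /eqP [->] //.
  by have := hz (inr k) isT; rewrite /join /z2 /= ?eqxx (ord1 o') opprD addrA.
- move=> [hz [hT hz1]]; split; first exact: hT.
  case=> [[i'|j']|k'] hk /=.
  + apply: (hz1 (inl i')); apply: contra hk => /eqP [->] //.
  + exact: (hz (inl j')).
  + case: (eqVneq k' k) => [->|hk'].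
      by rewrite opprD addrA; exact: (hz1 (inr ord0)).
    apply: (hz (inr k')); apply: contra hk' => /eqP [->] //.
- move=> [hA hz]; split.
    case=> [j'|k'] hk; first exact: (hz (inl (inr j'))).
    have := hz (inr k'); rewrite /= (negbTE (_ : k' != k)); first by apply.
    by apply: contra hk => /eqP ->.
  split; first by move: hA; rewrite /= ?eqxx opprD addrA.
  case=> [i'|o'] hk /=; first exact: (hz (inl (inl i'))).
  by rewrite (ord1 o') eqxx in hk.
- move=> [hz [hA hz1]]; split; first by rewrite /= ?eqxx opprD addrA; exact: hA.
  case=> [[i'|j']|k'] hk /=.
  + exact: (hz1 (inl i')).
  + exact: (hz (inl j')).
  + have hk' : k' != k by apply: contra hk => /eqP ->.
    rewrite (negbTE hk'); apply: (hz (inr k')); apply: contra hk' => /eqP [->] //.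
Qed.

Theorem proposition15
  (m n d : nat) (G : zmodType) (Gs : 'I_m -> zmodType) (Hs : 'I_n -> zmodType)
  (A B C : subset_of G)
  (T Bs : forall i, subset_of (Gs i))
  (U Cs : forall i, subset_of (Hs i)) :
  (0 < d)%N ->
  (* tiles are nonempty *)
  (exists a, A a) ->
  (forall i, exists t, T i t) ->
  (forall i, exists u, U i u) ->
  (* inclusions A ⊂ B ⊂ C, T_i ⊂ B_i, U_i ⊂ C_i *)
  (forall x, A x -> B x) -> (forall x, B x -> C x) ->
  (forall i x, T i x -> Bs i x) ->
  (forall i x, U i x -> Cs i x) ->
  (* B_1 x ... x B_m x B is (T_1,...,T_m,A)-tilable *)
  tilable (tS T (fun _ : 'I_1 => A))
          (boxset (tS Bs (fun _ : 'I_1 => B))) ->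
  (* C_1 x ... x C_n x C^d is (U_1,...,U_n,B^{x d})-tilable *)
  tilable (tS U (fun _ : 'I_d => B))
          (boxset (tS Cs (fun _ : 'I_d => C))) ->
  (* conclusion *)
  tilable (tS (tS T U) (fun _ : 'I_d => A))
          (boxset (tS (tS Bs Cs) (fun _ : 'I_d => C))).
Proof.
move=> _ _ _ _ _ _ _ _ [Ix1 [c1 [t1 [cov1 dis1]]]] [Ix2 [c2 [t2 [cov2 dis2]]]].
pose P1 := fun w : Ix2 * prodpt Gs * 'I_n => c2 w.1.1 = inl w.2 /\ boxset Bs w.1.2.
pose P2 := fun w : Ix2 * Ix1 * 'I_d => c2 w.1.1 = inr w.2.
have K2 : forall a2 a1 k p, c2 a2 = inr k ->
  copy (tS (tS T U) (fun _ : 'I_d => A)) (cmap 'I_n k (c1 a1))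
    (join (fun i => t1 a1 (inl i)) (z2 k (t2 a2) (t1 a1))) p ->
  copy (tS U (fun _ : 'I_d => B)) (c2 a2) (t2 a2) (projC p) /\
  copy (tS T (fun _ : 'I_1 => A)) (c1 a1) (t1 a1) (projA k (t2 a2) p).
  move=> a2 a1 k p e /L2 [hz h1]; split => //.
  have hq := (cov1 _).2 (ex_intro _ a1 h1).
  by rewrite e; split; [exact: (hq (inr ord0)) | exact: hz].
exists ({w | P1 w} + {w | P2 w})%type.
exists (fun a => match a with inl w => inl (inr (sval w).2)
          | inr w => cmap 'I_n (sval w).2 (c1 (sval w).1.2) end).
exists (fun a => match a with inl w => join (sval w).1.2 (t2 (sval w).1.1)
          | inr w => join (fun i => t1 (sval w).1.2 (inl i))
                          (z2 (sval w).2 (t2 (sval w).1.1) (t1 (sval w).1.2)) end).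
split.
- move=> p; split.
  + move=> hp.
    have hC : boxset (tS Cs (fun _ : 'I_d => C)) (projC p).
      by case=> [j|k]; [exact: (hp (inl (inr j))) | exact: (hp (inr k))].
    have [a2 ha2] := (cov2 (projC p)).1 hC.
    case e: (c2 a2) => [j|k].
    * have hB : boxset Bs (fun i => p (inl (inl i))) := fun i => hp (inl (inl i)).
      exists (inl (exist P1 (a2, (fun i => p (inl (inl i))), j) (conj e hB))).
      apply/(L1 _ B); split => //=; by rewrite -e.
    * rewrite e in ha2.
      have hq : boxset (tS Bs (fun _ : 'I_1 => B)) (projA k (t2 a2) p).
        by case=> [i|o]; [exact: (hp (inl (inl i))) | exact: ha2.1].
      have [a1 ha1] := (cov1 _).1 hq.
      exists (inr (exist P2 (a2, a1, k) e)).
      by apply/L2; split; [exact: ha2.2 | exact: ha1].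
  + case=> [[[[[a2 b] j] [e hb]]|[[[a2 a1] k] e]]] /=.
    * move/(L1 _ B) => [hpb hc]. rewrite -e in hc.
      have hC := (cov2 _).2 (ex_intro _ a2 hc).
      case=> [[i|j']|k'].
      -- by rewrite /= hpb; exact: hb.
      -- exact: (hC (inl j')).
      -- exact: (hC (inr k')).
    * move/(K2 _ _ _ _ e) => [hc h1].
      have hq := (cov1 _).2 (ex_intro _ a1 h1).
      have hC := (cov2 _).2 (ex_intro _ a2 hc).
      case=> [[i|j']|k']; [exact: (hq (inl i)) | exact: (hC (inl j')) | exact: (hC (inr k'))].
- move=> [[[[a2 b] j] [e hb]]|[[[a2 a1] k] e]] [[[[a2' b'] j'] [e' hb']]|[[[a2' a1'] k'] e']] p /=; simpl in *.
  + move/(L1 _ B) => [hb1 h1] /(L1 _ B) [hb2 h2].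
    rewrite -e in h1; rewrite -e' in h2.
    have ea : a2 = a2' := dis2 _ _ _ h1 h2; subst a2'.
    have := etrans (esym e) (e' : c2 a2 = _) => -[ej]; subst j'.
    have eb : b = b' by apply: functional_extensionality_dep => i; rewrite -hb1 hb2.
    subst b'; congr (inl (exist _ _ _)); apply: proof_irrelevance.
  + move/(L1 _ B) => [hb1 h1] /(K2 _ _ _ _ e') [h2 _].
    rewrite -e in h1.
    have ea : a2 = a2' := dis2 _ _ _ h1 h2; subst a2'.
    by have := etrans (esym e) (e' : c2 a2 = _).
  + move/(K2 _ _ _ _ e) => [h1 _] /(L1 _ B) [hb2 h2].
    rewrite -e' in h2.
    have ea : a2 = a2' := dis2 _ _ _ h1 h2; subst a2'.
    by have := etrans (esym e) (e' : c2 a2 = _).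
  + move/(K2 _ _ _ _ e) => [h1 g1] /(K2 _ _ _ _ e') [h2 g2].
    have ea : a2 = a2' := dis2 _ _ _ h1 h2; subst a2'.
    have := etrans (esym e) (e' : c2 a2 = _) => -[ek]; subst k'.
    have ea : a1 = a1' := dis1 _ _ _ g1 g2; subst a1'.
    congr (inr (exist _ _ _)); apply: proof_irrelevance.
Qed.
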